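(* (i) The subalgebras $U_e^+$ and $U_e^-$ are invariant under $S_{e_0}$ and $\tilde S_{e_0}$; the subalgebras $U_f^+$ and $U_f^-$ are invariant under $S_{f_0}$ and $\tilde S_{f_0}$. (ii) For all $x\in U_e$: $P_e^\pm S_{e_0}(x)=S_{e_0}P_e^\pm(x)$ and $P_e^\pm\tilde S_{e_0}(x)=\tilde S_{e_0}P_e^\pm(x)$; for all $x\in U_f$: $P_f^\pm S_{f_0}(x)=S_{f_0}P_f^\pm(x)$ and $P_f^\pm\tilde S_{f_0}(x)=\tilde S_{f_0}P_f^\pm(x)$.
   Context: $U=U_q(\widehat{\mathfrak{sl}}_2)$ in the Drinfeld new realization with currents $e(z)=\sum e_nz^{-n}$, $f(z)=\sum f_nz^{-n}$, relations $(z-q^2w)e(z)e(w)=(q^2z-w)e(w)e(z)$, $(z-q^{-2}w)f(z)f(w)=(q^{-2}z-w)f(w)f(z)$, $k=\psi_0^+$ with $ke_nk^{-1}=q^2e_n$, $kf_nk^{-1}=q^{-2}f_n$; counit $\varepsilon(e_n)=\varepsilon(f_n)=0$, $\varepsilon(k)=1$; $q$ not a root of unity. $U_e$ ($U_f$) is the subalgebra generated by all $e_n$ (all $f_n$); $U_e^+$, $U_e^-$ are generated by $e_n$, $n\ge0$, resp. $n<0$; $U_f^+$, $U_f^-$ by $f_n$, $n>0$, resp. $n\le0$. Multiplication gives linear isomorphisms $U_e^-\otimes U_e^+\to U_e$ and $U_f^-\otimes U_f^+\to U_f$, and the projections are $P_e^-(a_1a_2)=a_1\varepsilon(a_2)$,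 $P_e^+(a_1a_2)=\varepsilon(a_1)a_2$ for $a_1\in U_e^-,a_2\in U_e^+$, and $P_f^-(a_1a_2)=a_1\varepsilon(a_2)$, $P_f^+(a_1a_2)=\varepsilon(a_1)a_2$ for $a_1\in U_f^-,a_2\in U_f^+$. Screenings: $S_{e_0}(x)=e_0x-kxk^{-1}e_0$, $S_{f_0}(x)=xf_0-f_0kxk^{-1}$, $\tilde S_{e_0}(x)=xe_0-e_0k^{-1}xk$, $\tilde S_{f_0}(x)=f_0x-k^{-1}xkf_0$. *)

(* Defs.v *)
From HB Require Import structures.
From mathcomp Require Import all_boot all_order all_algebra.
Set Implicit Arguments. Unset Strict Implicit. Unset Printing Implicit Defensive.
Import Order.TTheory GRing.Theory Num.Theory.
Local Open Scope ring_scope.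

Section UqDefs.
Variables (K : fieldType) (U : unitAlgType K).

Inductive gen_subalg (G : U -> Prop) : U -> Prop :=
  | gen_base x : G x -> gen_subalg G x
  | gen_one : gen_subalg G 1
  | gen_lin (c : K) x y : gen_subalg G x -> gen_subalg G y -> gen_subalg G (c *: x + y)
  | gen_mul x y : gen_subalg G x -> gen_subalg G y -> gen_subalg G (x * y).

(** Linear span of the products a * b with a in A, b in B
    (= image of the multiplication map A (x) B -> U). *)
Inductive prod_span (A B : U -> Prop) : U -> Prop :=
  | ps_zero : prod_span A B 0
  | ps_prod a b : A a -> B b -> prod_span A B (a * b)
  | ps_lin (c : K) x y : prod_span A B x -> prod_span A B y -> prod_span A B (c *: x + y).

Definition S_e0 (e0 k x : U) : U := e0 * x - k * x * k^-1 * e0.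
Definition S_f0 (f0 k x : U) : U := x * f0 - f0 * k * x * k^-1.
Definition tS_e0 (e0 k x : U) : U := x * e0 - e0 * k^-1 * x * k.
Definition tS_f0 (f0 k x : U) : U := f0 * x - k^-1 * x * k * f0.

Definition stable_under (A : U -> Prop) (T : U -> U) := forall x, A x -> A (T x).

Definition linear_on (A : U -> Prop) (P : U -> U) :=
  forall (c : K) x y, A x -> A y -> P (c *: x + y) = c *: P x + P y.

End UqDefs.
Arguments stable_under {K U} A T.
Arguments linear_on {K U} A P.

(* Main.v *)
Require Import Defs.
From HB Require Import structures.
From mathcomp Require Import all_boot all_order all_algebra.
From mathcomp Require Import zify.
Import Order.TTheory GRing.Theory Num.Theory.
Local Open Scope ring_scope.

Section Gen.
Variables (K : fieldType) (U : unitAlgType K).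
Implicit Types (G : U -> Prop).

Lemma gs0 G : gen_subalg G 0.
Proof. have := gen_lin (-1) (gen_one G) (gen_one G). by rewrite scaleN1r addNr. Qed.
Lemma gsZ G c x : gen_subalg G x -> gen_subalg G (c *: x).
Proof. move=> h; have := gen_lin c h (gs0 G); by rewrite addr0. Qed.
Lemma gsD G x y : gen_subalg G x -> gen_subalg G y -> gen_subalg G (x + y).
Proof. move=> hx hy; have := gen_lin 1 hx hy; by rewrite scale1r. Qed.
Lemma gsB G x y : gen_subalg G x -> gen_subalg G y -> gen_subalg G (x - y).
Proof. move=> hx hy; have := gen_lin (-1) hy hx; by rewrite scaleN1r addrC. Qed.
Lemma gs_mono G G' : (forall x, G x -> G' x) -> forall x, gen_subalg G x -> gen_subalg G' x.
Proof. move=> h x; elim => *; by [apply: gen_base; apply: h | apply: gen_one | apply: gen_lin | apply: gen_mul]. Qed.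

Lemma hom_stable G (phi : U -> U) :
  (forall c x y, phi (c *: x + y) = c *: phi x + phi y) -> phi 1 = 1 ->
  (forall x y, phi (x * y) = phi x * phi y) ->
  (forall g, G g -> gen_subalg G (phi g)) -> stable_under (gen_subalg G) phi.
Proof.
move=> hl h1 hm hg x; elim => *.
- by apply: hg.
- by rewrite h1; apply: gen_one.
- by rewrite hl; apply: gen_lin.
- by rewrite hm; apply: gen_mul.
Qed.

Lemma der_stable G (D lam rho : U -> U) :
  (forall c x y, D (c *: x + y) = c *: D x + D y) -> D 1 = 0 ->
  (forall x y, D (x * y) = D x * rho y + lam x * D y) ->
  stable_under (gen_subalg G) lam -> stable_under (gen_subalg G) rho ->
  (forall g, G g -> gen_subalg G (D g)) -> stable_under (gen_subalg G) D.
Proof.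
move=> hl h1 hm sl sr hg x; elim => *.
- by apply: hg.
- by rewrite h1; apply: gs0.
- by rewrite hl; apply: gen_lin.
- rewrite hm; apply: gsD; apply: gen_mul => //; by [apply: sr | apply: sl].
Qed.

Lemma D0 (D : U -> U) : (forall c x y, D (c *: x + y) = c *: D x + D y) -> D 0 = 0.
Proof.
move=> hl; have := hl 1 0 0; rewrite scaler0 addr0 scale1r => /eqP.
by rewrite -{1}[D 0]addr0 (inj_eq (addrI _)) eq_sym => /eqP.
Qed.

Variable eps : {rmorphism U -> K}.
Hypothesis Heps_lin : forall (c : K) x, eps (c *: x) = c * eps x.

Section Comm.
Variables (Am Ap A : U -> Prop) (D lam rho P : U -> U).
Hypotheses (hAm : forall x, Am x -> A x) (hAp : forall x, Ap x -> A x)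
  (hAM : forall x y, A x -> A y -> A (x * y)) (hAD : forall x y, A x -> A y -> A (x + y))
  (hAZ : forall c x, A x -> A (c *: x)) (hA0 : A 0)
  (Dlin : forall c x y, D (c *: x + y) = c *: D x + D y)
  (Dprod : forall x y, D (x * y) = D x * rho y + lam x * D y)
  (epsD : forall x, eps (D x) = 0) (epsl : forall x, eps (lam x) = eps x)
  (epsr : forall x, eps (rho x) = eps x)
  (sDm : stable_under Am D) (sDp : stable_under Ap D)
  (slm : stable_under Am lam) (srp : stable_under Ap rho)
  (Plin : linear_on A P).

Lemma P0 : P 0 = 0.
Proof.
have := Plin 1 0 0 hA0 hA0; rewrite scaler0 addr0 scale1r => /eqP.
by rewrite -{1}[P 0]addr0 (inj_eq (addrI _)) eq_sym => /eqP.
Qed.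

Lemma ps_ind x : prod_span Am Ap x -> A x /\ A (D x).
Proof.
elim => [|a1 a2 h1 h2|c y z _ [hy hDy] _ [hz hDz]].
- by rewrite (D0 _ Dlin).
- split; first by apply: hAM; [apply: hAm | apply: hAp].
  rewrite Dprod; apply: hAD; apply: hAM.
  + by apply: hAm; apply: sDm.
  + by apply: hAp; apply: srp.
  + by apply: hAm; apply: slm.
  + by apply: hAp; apply: sDp.
- by rewrite Dlin; split; apply: hAD => //; apply: hAZ.
Qed.

Lemma comm_main
  (Pprod : forall a1 a2, Am a1 -> Ap a2 -> Am (D a1) -> Ap (rho a2) -> Am (lam a1) -> Ap (D a2) ->
     P (D (a1 * a2)) = D (P (a1 * a2))) :
  forall x, prod_span Am Ap x -> P (D x) = D (P x).
Proof.
move=> x hx; elim: hx => [|a1 a2 h1 h2|c y z hy IHy hz IHz].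
- by rewrite (D0 _ Dlin) P0 (D0 _ Dlin).
- apply: Pprod => //; by [apply: sDm | apply: srp | apply: slm | apply: sDp].
- have [Ay ADy] := ps_ind _ hy; have [Az ADz] := ps_ind _ hz.
  by rewrite Dlin !Plin // Dlin IHy IHz.
Qed.

Lemma PD x y : A x -> A y -> P (x + y) = P x + P y.
Proof. move=> hx hy; have := Plin 1 x y hx hy; by rewrite !scale1r. Qed.
Lemma DZ c x : D (c *: x) = c *: D x.
Proof. have := Dlin c x 0; by rewrite !addr0 (D0 _ Dlin) addr0. Qed.

Lemma comm_m (Pdef : forall a1 a2, Am a1 -> Ap a2 -> P (a1 * a2) = a1 * (eps a2)%:A) :
  forall x, prod_span Am Ap x -> P (D x) = D (P x).
Proof.
apply: comm_main => a1 a2 h1 h2 h3 h4 h5 h6.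
rewrite Dprod PD; last 2 first.
- by apply: hAM; [apply: hAm | apply: hAp].
- by apply: hAM; [apply: hAm | apply: hAp].
by rewrite !Pdef // epsr epsD scale0r mulr0 addr0 !mulr_algr DZ.
Qed.

Lemma comm_p (Pdef : forall a1 a2, Am a1 -> Ap a2 -> P (a1 * a2) = eps a1 *: a2) :
  forall x, prod_span Am Ap x -> P (D x) = D (P x).
Proof.
apply: comm_main => a1 a2 h1 h2 h3 h4 h5 h6.
rewrite Dprod PD; last 2 first.
- by apply: hAM; [apply: hAm | apply: hAp].
- by apply: hAM; [apply: hAm | apply: hAp].
by rewrite !Pdef // epsl epsD scale0r add0r DZ.
Qed.
End Comm.
End Gen.
Section Spec.
Variables (K : fieldType) (U : unitAlgType K) (k a : U).
Hypothesis Hk : k \is a GRing.unit.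

Definition sgm (x : U) := k * x * k^-1.
Definition tau (x : U) := k^-1 * x * k.
End Spec.
Arguments sgm {K U} k x.
Arguments tau {K U} k x.
Section Spec2.
Variables (K : fieldType) (U : unitAlgType K) (k a : U).
Hypothesis Hk : k \is a GRing.unit.
Local Notation sgm := (sgm k).
Local Notation tau := (tau k).

Lemma sgm_lin c x y : sgm (c *: x + y) = c *: sgm x + sgm y.
Proof. by rewrite /sgm mulrDr mulrDl -scalerAr -scalerAl. Qed.
Lemma tau_lin c x y : tau (c *: x + y) = c *: tau x + tau y.
Proof. by rewrite /tau mulrDr mulrDl -scalerAr -scalerAl. Qed.
Lemma sgm1 : sgm 1 = 1. Proof. by rewrite /sgm mulr1 mulrV. Qed.
Lemma tau1 : tau 1 = 1. Proof. by rewrite /tau mulr1 mulVr. Qed.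
Lemma sgmM x y : sgm (x * y) = sgm x * sgm y.
Proof. by rewrite /sgm !mulrA (mulrVK Hk). Qed.
Lemma tauM x y : tau (x * y) = tau x * tau y.
Proof. by rewrite /tau !mulrA (mulrK Hk). Qed.
Lemma tau_sgm x : tau (sgm x) = x.
Proof. by rewrite /tau /sgm !mulrA (mulVr Hk) mul1r (mulrVK Hk). Qed.

Lemma lin_sub (F G : U -> U) :
  (forall c x y, F (c *: x + y) = c *: F x + F y) ->
  (forall c x y, G (c *: x + y) = c *: G x + G y) ->
  forall c x y, F (c *: x + y) - G (c *: x + y) = c *: (F x - G x) + (F y - G y).
Proof. by move=> hF hG c x y; rewrite hF hG scalerBr opprD addrACA. Qed.

Lemma Se_lin c x y : S_e0 a k (c *: x + y) = c *: S_e0 a k x + S_e0 a k y.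
Proof.
apply: (lin_sub (fun x => a * x) (fun x => k * x * k^-1 * a)) => c' x' y'.
  by rewrite mulrDr scalerAr.
by rewrite mulrDr mulrDl mulrDl -!scalerAr -!scalerAl.
Qed.
Lemma tSe_lin c x y : tS_e0 a k (c *: x + y) = c *: tS_e0 a k x + tS_e0 a k y.
Proof.
apply: (lin_sub (fun x => x * a) (fun x => a * k^-1 * x * k)) => c' x' y'.
  by rewrite mulrDl scalerAl.
by rewrite mulrDr mulrDl -!scalerAr -!scalerAl.
Qed.
Lemma Sf_lin c x y : S_f0 a k (c *: x + y) = c *: S_f0 a k x + S_f0 a k y.
Proof.
apply: (lin_sub (fun x => x * a) (fun x => a * k * x * k^-1)) => c' x' y'.
  by rewrite mulrDl scalerAl.
by rewrite mulrDr mulrDl -!scalerAr -!scalerAl.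
Qed.
Lemma tSf_lin c x y : tS_f0 a k (c *: x + y) = c *: tS_f0 a k x + tS_f0 a k y.
Proof.
apply: (lin_sub (fun x => a * x) (fun x => k^-1 * x * k * a)) => c' x' y'.
  by rewrite mulrDr scalerAr.
by rewrite mulrDr mulrDl mulrDl -!scalerAr -!scalerAl.
Qed.

Lemma Se_M x y : S_e0 a k (x * y) = S_e0 a k x * y + sgm x * S_e0 a k y.
Proof.
rewrite /S_e0 /sgm !mulrBl !mulrBr !mulrA (mulrVK Hk).
by rewrite [RHS]addrA subrK.
Qed.
Lemma tSe_M x y : tS_e0 a k (x * y) = tS_e0 a k x * tau y + x * tS_e0 a k y.
Proof.
rewrite /tS_e0 /tau !mulrBl !mulrBr !mulrA (mulrK Hk).
by rewrite [RHS]addrC [RHS]addrA subrK.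
Qed.
Lemma Sf_M x y : S_f0 a k (x * y) = S_f0 a k x * sgm y + x * S_f0 a k y.
Proof.
rewrite /S_f0 /sgm !mulrBl !mulrBr !mulrA (mulrVK Hk).
by rewrite [RHS]addrC [RHS]addrA subrK.
Qed.
Lemma tSf_M x y : tS_f0 a k (x * y) = tS_f0 a k x * y + tau x * tS_f0 a k y.
Proof.
rewrite /tS_f0 /tau !mulrBl !mulrBr !mulrA (mulrK Hk).
by rewrite [RHS]addrA subrK.
Qed.

Lemma Se1 : S_e0 a k 1 = 0. Proof. by rewrite /S_e0 mulr1 mulr1 (mulrV Hk) mul1r subrr. Qed.
Lemma tSe1 : tS_e0 a k 1 = 0. Proof. by rewrite /tS_e0 mul1r mulr1 (mulrVK Hk) subrr. Qed.
Lemma Sf1 : S_f0 a k 1 = 0. Proof. by rewrite /S_f0 mul1r mulr1 (mulrK Hk) subrr. Qed.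
Lemma tSf1 : tS_f0 a k 1 = 0. Proof. by rewrite /tS_f0 mulr1 mulr1 (mulVr Hk) mul1r subrr. Qed.

Variable eps : {rmorphism U -> K}.
Hypothesis (Heps_a : eps a = 0) (Heps_k : eps k = 1).
Lemma eps_kV : eps k^-1 = 1.
Proof.
have := congr1 eps (mulrV Hk); by rewrite rmorphM rmorph1 Heps_k mul1r.
Qed.
Lemma eps_sgm x : eps (sgm x) = eps x.
Proof. by rewrite /sgm !rmorphM Heps_k eps_kV mul1r mulr1. Qed.
Lemma eps_tau x : eps (tau x) = eps x.
Proof. by rewrite /tau !rmorphM Heps_k eps_kV mul1r mulr1. Qed.
Lemma eps_Se x : eps (S_e0 a k x) = 0.
Proof. by rewrite /S_e0 rmorphB !rmorphM Heps_a mulr0 mul0r subrr. Qed.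
Lemma eps_tSe x : eps (tS_e0 a k x) = 0.
Proof. by rewrite /tS_e0 rmorphB !rmorphM Heps_a mulr0 !mul0r subrr. Qed.
Lemma eps_Sf x : eps (S_f0 a k x) = 0.
Proof. by rewrite /S_f0 rmorphB !rmorphM Heps_a mulr0 !mul0r subrr. Qed.
Lemma eps_tSf x : eps (tS_f0 a k x) = 0.
Proof. by rewrite /tS_f0 rmorphB !rmorphM Heps_a mulr0 !mul0r subrr. Qed.
End Spec2.
Lemma swap4 (V : zmodType) (A B C D : V) : A - B = C - D -> A - C = B - D.
Proof.
move=> h; apply/eqP; rewrite -subr_eq0 opprB addrACA [- C + _]addrC.
have : (A - B) - (C - D) = 0 by rewrite h subrr.
by rewrite opprB addrACA => ->.
Qed.
Lemma half0 (K : fieldType) (V : lmodType K) (x : V) : (2%:R : K) != 0 -> x = - x -> x = 0.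
Proof.
move=> h2 hx; have : (2%:R : K) *: x = 0 by rewrite scaler_nat mulr2n {1}hx addNr.
by move/eqP; rewrite scaler_eq0 (negbTE h2) => /eqP.
Qed.

Theorem mainTheorem6
  (K : fieldType) (U : unitAlgType K) (q : K)
  (e f : int -> U) (k : U) (eps : {rmorphism U -> K})
  (HK : [pchar K] =i pred0)
  (Hq0 : q != 0) (Hq : forall n : nat, (0 < n)%N -> q ^+ n != 1)
  (He : forall a b : int,
     e (a + 1) * e b - q ^+ 2 *: (e a * e (b + 1))
     = q ^+ 2 *: (e b * e (a + 1)) - e (b + 1) * e a)
  (Hf : forall a b : int,
     f (a + 1) * f b - q ^- 2 *: (f a * f (b + 1))
     = q ^- 2 *: (f b * f (a + 1)) - f (b + 1) * f a)
  (Hk : k \is a GRing.unit)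
  (Hke : forall n, k * e n * k^-1 = q ^+ 2 *: e n)
  (Hkf : forall n, k * f n * k^-1 = q ^- 2 *: f n)
  (Heps_lin : forall (c : K) x, eps (c *: x) = c * eps x)
  (Heps_e : forall n, eps (e n) = 0) (Heps_f : forall n, eps (f n) = 0)
  (Heps_k : eps k = 1)
  (Pem Pep Pfm Pfp : U -> U) :
  let Ue := gen_subalg (fun x => exists n, x = e n) in
  let Uep := gen_subalg (fun x => exists2 n : int, (0 <= n)%R & x = e n) in
  let Uem := gen_subalg (fun x => exists2 n : int, (n < 0)%R & x = e n) in
  let Uf := gen_subalg (fun x => exists n, x = f n) in
  let Ufp := gen_subalg (fun x => exists2 n : int, (0 < n)%R & x = f n) in
  let Ufm := gen_subalg (fun x => exists2 n : int, (n <= 0)%R & x = f n) in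
  (forall x, Ue x -> prod_span Uem Uep x) ->
  (forall x, Uf x -> prod_span Ufm Ufp x) ->
  linear_on Ue Pem -> linear_on Ue Pep -> linear_on Uf Pfm -> linear_on Uf Pfp ->
  (forall a1 a2, Uem a1 -> Uep a2 -> Pem (a1 * a2) = a1 * (eps a2)%:A) ->
  (forall a1 a2, Uem a1 -> Uep a2 -> Pep (a1 * a2) = eps a1 *: a2) ->
  (forall a1 a2, Ufm a1 -> Ufp a2 -> Pfm (a1 * a2) = a1 * (eps a2)%:A) ->
  (forall a1 a2, Ufm a1 -> Ufp a2 -> Pfp (a1 * a2) = eps a1 *: a2) ->
  let Se := S_e0 (e 0) k in let tSe := tS_e0 (e 0) k in
  let Sf := S_f0 (f 0) k in let tSf := tS_f0 (f 0) k in
  ([/\ stable_under Uep Se, stable_under Uem Se, stable_under Uep tSe & stable_under Uem tSe] /\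
   [/\ stable_under Ufp Sf, stable_under Ufm Sf, stable_under Ufp tSf & stable_under Ufm tSf])
  /\
  ((forall x, Ue x ->
        [/\ Pem (Se x) = Se (Pem x), Pep (Se x) = Se (Pep x),
            Pem (tSe x) = tSe (Pem x) & Pep (tSe x) = tSe (Pep x)])
    /\ (forall x, Uf x ->
        [/\ Pfm (Sf x) = Sf (Pfm x), Pfp (Sf x) = Sf (Pfp x),
            Pfm (tSf x) = tSf (Pfm x) & Pfp (tSf x) = tSf (Pfp x)])).
Proof.
move=> Ue Uep Uem Uf Ufp Ufm HpsE HpsF Pemlin Peplin Pfmlin Pfplin Pemd Pepd Pfmd Pfpd Se tSe Sf tSf.
have h2 : (2%:R : K) != 0 by rewrite ((pcharf0P K).1 HK 2).
have q2 : q ^+ 2 != 0 by rewrite expf_neq0.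
have sigZ (c : K) (x : U) : sgm k (c *: x) = c *: sgm k x.
  by have := @sgm_lin K U k c x 0; rewrite !addr0 {3}/sgm mulr0 mul0r addr0.
have tauZ (c : K) (x : U) : tau k (c *: x) = c *: tau k x.
  by have := @tau_lin K U k c x 0; rewrite !addr0 {3}/tau mulr0 mul0r addr0.
have sigE n : sgm k (e n) = q ^+ 2 *: e n by exact: Hke.
have sigF n : sgm k (f n) = q ^- 2 *: f n by exact: Hkf.
have tauE n : tau k (e n) = q ^- 2 *: e n.
  have h := @tau_sgm K U k Hk (e n); rewrite sigE tauZ in h.
  by rewrite -{2}h scalerA mulVf // scale1r.
have tauF n : tau k (f n) = q ^+ 2 *: f n.
  have h := @tau_sgm K U k Hk (f n); rewrite sigF tauZ in h.
  by rewrite -{2}h scalerA mulfV ?invr_eq0 // scale1r.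
have hX n : e 0 * e n - q ^+ 2 *: (e n * e 0)
    = q ^+ 2 *: (e (-1) * e (n + 1)) - e (n + 1) * e (-1).
  by apply: swap4; have := He (-1) n; rewrite (_ : -1 + 1 = 0).
have hX1 : e 0 * e (-1) - q ^+ 2 *: (e (-1) * e 0) = 0.
  apply: half0 h2 _; rewrite {1}hX opprB (_ : -1 + 1 = 0) //.
have hY n : f n * f 0 - q ^- 2 *: (f 0 * f n)
    = q ^- 2 *: (f (n - 1) * f 1) - f 1 * f (n - 1).
  by apply: swap4; have := Hf (n - 1) 0; rewrite subrK add0r.
have hY1 : f 1 * f 0 - q ^- 2 *: (f 0 * f 1) = 0.
  apply: half0 h2 _; rewrite {1}hY opprB subrr //.
have SeE n : Se (e n) = e 0 * e n - q ^+ 2 *: (e n * e 0).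
  by rewrite /Se /S_e0 Hke -scalerAl.
have tSeE n : tSe (e n) = - q ^- 2 *: (e 0 * e n - q ^+ 2 *: (e n * e 0)).
  rewrite /tSe /tS_e0 -(mulrA (e 0)) -(mulrA (e 0)) -[_ * e n * k]/(tau k (e n)) tauE.
  rewrite scalerBr scalerA mulNr mulVf // scaleN1r opprK scaleNr -scalerAr.
  by rewrite [RHS]addrC.
have SfE n : Sf (f n) = f n * f 0 - q ^- 2 *: (f 0 * f n).
  by rewrite /Sf /S_f0 -(mulrA (f 0)) -(mulrA (f 0)) -[k * f n * k^-1]/(sgm k (f n)) sigF -scalerAr.
have tSfE n : tSf (f n) = - q ^+ 2 *: (f n * f 0 - q ^- 2 *: (f 0 * f n)).
  rewrite /tSf /tS_f0 -[k^-1 * f n * k]/(tau k (f n)) tauF.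
  rewrite scalerBr scalerA mulNr mulfV // scaleN1r opprK scaleNr -scalerAl.
  by rewrite [RHS]addrC.
have bE n : Ue (e n) by apply: gen_base; exists n.
have bF n : Uf (f n) by apply: gen_base; exists n.
have bEp n : 0 <= n -> Uep (e n) by move=> h; apply: gen_base; exists n.
have bEm n : n < 0 -> Uem (e n) by move=> h; apply: gen_base; exists n.
have bFp n : 0 < n -> Ufp (f n) by move=> h; apply: gen_base; exists n.
have bFm n : n <= 0 -> Ufm (f n) by move=> h; apply: gen_base; exists n.
have sgmS (g : int -> U) P :
    (forall n, sgm k (g n) = q ^+ 2 *: g n \/ sgm k (g n) = q ^- 2 *: g n) ->
    stable_under (gen_subalg (fun x => exists2 n : int, P n & x = g n)) (sgm k).
  move=> hg; apply: hom_stable; [exact: sgm_lin | by apply: sgm1 | by apply: sgmM |].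
  move=> _ [n hn ->]; case: (hg n) => ->; apply: gsZ; apply: gen_base; by exists n.
have tauS (g : int -> U) P :
    (forall n, tau k (g n) = q ^+ 2 *: g n \/ tau k (g n) = q ^- 2 *: g n) ->
    stable_under (gen_subalg (fun x => exists2 n : int, P n & x = g n)) (tau k).
  move=> hg; apply: hom_stable; [exact: tau_lin | by apply: tau1 | by apply: tauM |].
  move=> _ [n hn ->]; case: (hg n) => ->; apply: gsZ; apply: gen_base; by exists n.
have sgm_ep : stable_under Uep (sgm k) by apply: sgmS => n; left; exact: sigE.
have sgm_em : stable_under Uem (sgm k) by apply: sgmS => n; left; exact: sigE.
have sgm_fp : stable_under Ufp (sgm k) by apply: sgmS => n; right; exact: sigF.
have sgm_fm : stable_under Ufm (sgm k) by apply: sgmS => n; right; exact: sigF.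
have tau_ep : stable_under Uep (tau k) by apply: tauS => n; right; exact: tauE.
have tau_em : stable_under Uem (tau k) by apply: tauS => n; right; exact: tauE.
have tau_fp : stable_under Ufp (tau k) by apply: tauS => n; left; exact: tauF.
have tau_fm : stable_under Ufm (tau k) by apply: tauS => n; left; exact: tauF.
have id_S (A : U -> Prop) : stable_under A id by [].
have XEp n : 0 <= n -> Uep (e 0 * e n - q ^+ 2 *: (e n * e 0)).
  move=> hn; apply: gsB; [|apply: gsZ]; apply: gen_mul; by apply: bEp.
have XEm n : n < 0 -> Uem (e 0 * e n - q ^+ 2 *: (e n * e 0)).
  move=> hn; case: (eqVneq n (-1)) => [->|hn1]; first by rewrite hX1; apply: gs0.
  rewrite hX; apply: gsB; [apply: gsZ|]; apply: gen_mul; apply: bEm => //; lia.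
have YFm n : n <= 0 -> Ufm (f n * f 0 - q ^- 2 *: (f 0 * f n)).
  move=> hn; apply: gsB; [|apply: gsZ]; apply: gen_mul; by apply: bFm.
have YFp n : 0 < n -> Ufp (f n * f 0 - q ^- 2 *: (f 0 * f n)).
  move=> hn; case: (eqVneq n 1) => [->|hn1]; first by rewrite hY1; apply: gs0.
  rewrite hY; apply: gsB; [apply: gsZ|]; apply: gen_mul; apply: bFp => //; lia.
have SeL : forall c x y, Se (c *: x + y) = c *: Se x + Se y by move=> *; apply: Se_lin.
have tSeL : forall c x y, tSe (c *: x + y) = c *: tSe x + tSe y by move=> *; apply: tSe_lin.
have SfL : forall c x y, Sf (c *: x + y) = c *: Sf x + Sf y by move=> *; apply: Sf_lin.
have tSfL : forall c x y, tSf (c *: x + y) = c *: tSf x + tSf y by move=> *; apply: tSf_lin.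
have SeP : forall x y, Se (x * y) = Se x * id y + sgm k x * Se y by move=> *; apply: Se_M.
have tSeP : forall x y, tSe (x * y) = tSe x * tau k y + id x * tSe y by move=> *; apply: tSe_M.
have SfP : forall x y, Sf (x * y) = Sf x * sgm k y + id x * Sf y by move=> *; apply: Sf_M.
have tSfP : forall x y, tSf (x * y) = tSf x * id y + tau k x * tSf y by move=> *; apply: tSf_M.
have Se_1 : Se 1 = 0 by apply: Se1.
have tSe_1 : tSe 1 = 0 by apply: tSe1.
have Sf_1 : Sf 1 = 0 by apply: Sf1.
have tSf_1 : tSf 1 = 0 by apply: tSf1.
have sSe_ep : stable_under Uep Se.
  apply: der_stable SeL Se_1 SeP sgm_ep (id_S _) _.
  by move=> _ [n hn ->]; rewrite SeE; apply: XEp.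
have sSe_em : stable_under Uem Se.
  apply: der_stable SeL Se_1 SeP sgm_em (id_S _) _.
  by move=> _ [n hn ->]; rewrite SeE; apply: XEm.
have stSe_ep : stable_under Uep tSe.
  apply: der_stable tSeL tSe_1 tSeP (id_S _) tau_ep _.
  by move=> _ [n hn ->]; rewrite tSeE; apply: gsZ; apply: XEp.
have stSe_em : stable_under Uem tSe.
  apply: der_stable tSeL tSe_1 tSeP (id_S _) tau_em _.
  by move=> _ [n hn ->]; rewrite tSeE; apply: gsZ; apply: XEm.
have sSf_fp : stable_under Ufp Sf.
  apply: der_stable SfL Sf_1 SfP (id_S _) sgm_fp _.
  by move=> _ [n hn ->]; rewrite SfE; apply: YFp.
have sSf_fm : stable_under Ufm Sf.
  apply: der_stable SfL Sf_1 SfP (id_S _) sgm_fm _.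
  by move=> _ [n hn ->]; rewrite SfE; apply: YFm.
have stSf_fp : stable_under Ufp tSf.
  apply: der_stable tSfL tSf_1 tSfP tau_fp (id_S _) _.
  by move=> _ [n hn ->]; rewrite tSfE; apply: gsZ; apply: YFp.
have stSf_fm : stable_under Ufm tSf.
  apply: der_stable tSfL tSf_1 tSfP tau_fm (id_S _) _.
  by move=> _ [n hn ->]; rewrite tSfE; apply: gsZ; apply: YFm.
split; first by split; split.
have hAmE : forall x, Uem x -> Ue x.
  by apply: gs_mono => _ [n _ ->]; exists n.
have hApE : forall x, Uep x -> Ue x.
  by apply: gs_mono => _ [n _ ->]; exists n.
have hAmF : forall x, Ufm x -> Uf x.
  by apply: gs_mono => _ [n _ ->]; exists n.
have hApF : forall x, Ufp x -> Uf x.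
  by apply: gs_mono => _ [n _ ->]; exists n.
have hM (G : U -> Prop) : forall x y, gen_subalg G x -> gen_subalg G y -> gen_subalg G (x * y).
  by move=> x y hx hy; apply: gen_mul.
have hD (G : U -> Prop) : forall x y, gen_subalg G x -> gen_subalg G y -> gen_subalg G (x + y).
  by move=> x y; apply: gsD.
have hZ (G : U -> Prop) : forall (c : K) x, gen_subalg G x -> gen_subalg G (c *: x).
  by move=> c x; apply: gsZ.
have h0 (G : U -> Prop) : gen_subalg G 0 by apply: gs0.
have epsid : forall x, eps (id x) = eps x by [].
have epsg : forall x, eps (sgm k x) = eps x by move=> x; apply: eps_sgm.
have epst : forall x, eps (tau k x) = eps x by move=> x; apply: eps_tau.
have eSe : forall x, eps (Se x) = 0 by move=> x; apply: eps_Se.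
have etSe : forall x, eps (tSe x) = 0 by move=> x; apply: eps_tSe.
have eSf : forall x, eps (Sf x) = 0 by move=> x; apply: eps_Sf.
have etSf : forall x, eps (tSf x) = 0 by move=> x; apply: eps_tSf.
split.
  move=> x hx; have hps := HpsE x hx; split.
  - exact: (@comm_m K U eps Uem Uep Ue Se (sgm k) id Pem hAmE hApE (hM _) (hD _) (hZ _) (h0 _)
      SeL SeP eSe epsid sSe_em sSe_ep sgm_em (id_S _) Pemlin Pemd x hps).
  - exact: (@comm_p K U eps Uem Uep Ue Se (sgm k) id Pep hAmE hApE (hM _) (hD _) (hZ _) (h0 _)
      SeL SeP eSe epsg sSe_em sSe_ep sgm_em (id_S _) Peplin Pepd x hps).
  - exact: (@comm_m K U eps Uem Uep Ue tSe id (tau k) Pem hAmE hApE (hM _) (hD _) (hZ _) (h0 _)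
      tSeL tSeP etSe epst stSe_em stSe_ep (id_S _) tau_ep Pemlin Pemd x hps).
  - exact: (@comm_p K U eps Uem Uep Ue tSe id (tau k) Pep hAmE hApE (hM _) (hD _) (hZ _) (h0 _)
      tSeL tSeP etSe epsid stSe_em stSe_ep (id_S _) tau_ep Peplin Pepd x hps).
move=> x hx; have hps := HpsF x hx; split.
- exact: (@comm_m K U eps Ufm Ufp Uf Sf id (sgm k) Pfm hAmF hApF (hM _) (hD _) (hZ _) (h0 _)
    SfL SfP eSf epsg sSf_fm sSf_fp (id_S _) sgm_fp Pfmlin Pfmd x hps).
- exact: (@comm_p K U eps Ufm Ufp Uf Sf id (sgm k) Pfp hAmF hApF (hM _) (hD _) (hZ _) (h0 _)
    SfL SfP eSf epsid sSf_fm sSf_fp (id_S _) sgm_fp Pfplin Pfpd x hps).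
- exact: (@comm_m K U eps Ufm Ufp Uf tSf (tau k) id Pfm hAmF hApF (hM _) (hD _) (hZ _) (h0 _)
    tSfL tSfP etSf epsid stSf_fm stSf_fp tau_fm (id_S _) Pfmlin Pfmd x hps).
- exact: (@comm_p K U eps Ufm Ufp Uf tSf (tau k) id Pfp hAmF hApF (hM _) (hD _) (hZ _) (h0 _)
    tSfL tSfP etSf epst stSf_fm stSf_fp tau_fm (id_S _) Pfplin Pfpd x hps).
Qed.
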